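(* Let $Q_1,Q_2\ge1$ be integers, $\lambda_1,\lambda_2,\mu>0$, $p_{12},p_{21}\in[0,1]$, $s=\lambda_1+\lambda_2$, $s_1=\lambda_1+\lambda_2p_{21}$, $s_2=\lambda_2+\lambda_1p_{12}$, and $$q_i=\frac{\lambda_i}{s+\mu}\ (i=1,2),\quad q_3=\frac{\mu}{s+\mu},\quad A_1=\frac{s_1}{s_1+\mu},\quad A_2=\frac{s_2}{s_2+\mu},\quad B_1=\frac{\lambda_1}{s_2+\mu},\quad B_2=\frac{\lambda_2}{s_1+\mu}.$$ Then the stationary distribution $(\pi_{(j_1,j_2)})$ of the inventory CTMC with random replenishment (see context) is: $$\pi_{(Q_1-i_1,Q_2-i_2)}=\binom{i_1+i_2}{i_1}q_1^{i_1}q_2^{i_2}q_3,\quad 0\le i_1\le Q_1-1,\ 0\le i_2\le Q_2-1;$$ $$\pi_{(Q_1-i_1,0)}=B_2q_2^{Q_2-1}q_3\sum_{k=0}^{i_1}A_1^{i_1-k}q_1^k\binom{Q_2+k-1}{k},\quad 0\le i_1\le Q_1-1;$$ $$\pi_{(0,Q_2-i_2)}=B_1q_1^{Q_1-1}q_3\sum_{k=0}^{i_2}A_2^{i_2-k}q_2^k\binom{Q_1+k-1}{k},\quad 0\le i_2\le Q_2-1;$$ $$\pi_{(0,0)}=\frac{s_1}{\mu}B_2q_2^{Q_2-1}q_3\sum_{k=0}^{Q_1-1}A_1^{Q_1-1-k}q_1^k\binom{Q_2+k-1}{k}+\frac{s_2}{\mu}B_1q_1^{Q_1-1}q_3\s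um_{k=0}^{Q_2-1}A_2^{Q_2-1-k}q_2^k\binom{Q_1+k-1}{k}.$$
   Context: Inventory CTMC with random replenishment: state space $\{0,\dots,Q_1\}\times\{0,\dots,Q_2\}$; demand transitions: from $(i_1,i_2)$ with $i_1,i_2\ge1$, to $(i_1-1,i_2)$ at rate $\lambda_1$ and to $(i_1,i_2-1)$ at rate $\lambda_2$; from $(i_1,0)$ with $i_1\ge1$, to $(i_1-1,0)$ at rate $s_1$; from $(0,i_2)$ with $i_2\ge1$, to $(0,i_2-1)$ at rate $s_2$; no demand transitions out of $(0,0)$. In addition, from every state there is a replenishment transition to $(Q_1,Q_2)$ at rate $\mu$. (This models Poisson arrivals of rate $\lambda_i$ for product $i$, a customer for out-of-stock product $i$ buying the other product $j$ w.p. $p_{ij}$ if it is in stock, and exponential($\mu$) replenishment times restoring both stocks to $(Q_1,Q_2)$.) *)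

(* Defs.v *)
From HB Require Import structures.
From mathcomp Require Import all_boot all_order all_algebra.
Set Implicit Arguments. Unset Strict Implicit. Unset Printing Implicit Defensive.
Import Order.TTheory GRing.Theory Num.Theory.
Local Open Scope ring_scope.

Section Inventory.
Variables (R : realFieldType) (Q1 Q2 : nat) (l1 l2 mu p12 p21 : R).

Definition state := ('I_Q1.+1 * 'I_Q2.+1)%type.

Definition s_ := l1 + l2.
Definition s1_ := l1 + l2 * p21.
Definition s2_ := l2 + l1 * p12.

Definition demand_rate (i1 i2 j1 j2 : nat) : R :=
  if (0 < i1)%N && (0 < i2)%N then
    (if (j1 == i1.-1) && (j2 == i2) then l1 else 0) +
    (if (j1 == i1) && (j2 == i2.-1) then l2 else 0)
  else if (0 < i1)%N && (i2 == 0)%N then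
    (if (j1 == i1.-1) && (j2 == 0)%N then s1_ else 0)
  else if (i1 == 0)%N && (0 < i2)%N then
    (if (j1 == 0)%N && (j2 == i2.-1) then s2_ else 0)
  else 0.

(* Total transition rate from x to y (used only for x != y):
   demand transitions plus replenishment to (Q1,Q2) at rate mu. *)
Definition rate (x y : state) : R :=
  demand_rate x.1 x.2 y.1 y.2 +
  (if ((y.1 : nat) == Q1) && ((y.2 : nat) == Q2) then mu else 0).

Definition stationary (pi : state -> R) : Prop :=
  (forall x, 0 <= pi x) /\ (\sum_x pi x = 1) /\
  (forall y : state,
     \sum_(x | x != y) pi x * rate x y = pi y * \sum_(z | z != y) rate y z).

Definition q1_ := l1 / (s_ + mu).
Definition q2_ := l2 / (s_ + mu).
Definition q3_ := mu / (s_ + mu).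
Definition A1_ := s1_ / (s1_ + mu).
Definition A2_ := s2_ / (s2_ + mu).
Definition B1_ := l1 / (s2_ + mu).
Definition B2_ := l2 / (s1_ + mu).

Definition edge1 (i1 : nat) : R :=
  B2_ * q2_ ^+ Q2.-1 * q3_ *
  \sum_(0 <= k < i1.+1) A1_ ^+ (i1 - k) * q1_ ^+ k * ('C(Q2 + k - 1, k))%:R.
Definition edge2 (i2 : nat) : R :=
  B1_ * q1_ ^+ Q1.-1 * q3_ *
  \sum_(0 <= k < i2.+1) A2_ ^+ (i2 - k) * q2_ ^+ k * ('C(Q1 + k - 1, k))%:R.

Definition pi_formula (j1 j2 : nat) : R :=
  if (0 < j1)%N && (0 < j2)%N then
    let i1 := (Q1 - j1)%N in let i2 := (Q2 - j2)%N in
    ('C(i1 + i2, i1))%:R * q1_ ^+ i1 * q2_ ^+ i2 * q3_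
  else if (0 < j1)%N then edge1 (Q1 - j1)
  else if (0 < j2)%N then edge2 (Q2 - j2)
  else s1_ / mu * edge1 Q1.-1 + s2_ / mu * edge2 Q2.-1.

End Inventory.

(* Main.v *)
Require Import Defs.
From HB Require Import structures.
From mathcomp Require Import all_boot all_order all_algebra zify ring lra.
Set Implicit Arguments. Unset Strict Implicit. Unset Printing Implicit Defensive.
Import Order.TTheory GRing.Theory Num.Theory.
Local Open Scope ring_scope.
Section S.
Variables (R : realFieldType) (Q1 Q2 : nat) (l1 l2 mu p12 p21 : R).
Local Notation dr := (@demand_rate R l1 l2 p12 p21).
Lemma dr_src (x1 x2 y1 y2 : nat) : dr x1 x2 y1 y2 =
  (if (x1 == y1.+1) && (x2 == y2) then (if (0 < y2)%N then l1 else s1_ l1 l2 p21) else 0) +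
  (if (x1 == y1) && (x2 == y2.+1) then (if (0 < y1)%N then l2 else s2_ l1 l2 p12) else 0).
Proof.
rewrite /demand_rate.
case: x1 => [|x1]; case: x2 => [|x2]; case: y1 => [|y1]; case: y2 => [|y2] /=;
  rewrite ?eqSS ?addr0 ?add0r //;
  repeat (case: eqP => //= ?); subst; rewrite ?addr0 ?add0r //; try lia.
Qed.
Lemma dr_tgt (y1 y2 z1 z2 : nat) : dr y1 y2 z1 z2 =
  (if (0 < y1)%N then (if (z1 == y1.-1) && (z2 == y2) then (if (0 < y2)%N then l1 else s1_ l1 l2 p21) else 0) else 0) +
  (if (0 < y2)%N then (if (z1 == y1) && (z2 == y2.-1) then (if (0 < y1)%N then l2 else s2_ l1 l2 p12) else 0) else 0).
Proof.
rewrite /demand_rate.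
case: y1 => [|y1]; case: y2 => [|y2] /=; rewrite ?addr0 ?add0r //.
Qed.
Local Notation st := (state Q1 Q2).
Lemma sum_pick (F : st -> R) (a b : nat) (y : st) :
 \sum_(x | x != y) (if ((x.1:nat) == a) && ((x.2:nat) == b) then F x else 0) =
 if [&& (a <= Q1)%N, (b <= Q2)%N & ~~ (((y.1:nat) == a) && ((y.2:nat) == b))]
 then F (inord a, inord b) else 0.
Proof.
case: ifP => [/and3P [ha hb hy] | hc].
- have hne : (inord a, inord b) != y :> st.
    apply: contra hy => /eqP <-; rewrite /= !inordK ?eqxx //.
  rewrite (bigD1 ((inord a, inord b) : st)) //= !inordK // !eqxx /= big1 ?addr0 //.
  move=> x /andP [_ hx]; case: ifP => // /andP [/eqP e1 /eqP e2]; exfalso.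
  move/negP: hx; apply; apply/eqP; case: x e1 e2 => x1 x2 /= e1 e2; congr (_, _); apply: val_inj; rewrite /= inordK // ?e1 ?e2 //.
- apply: big1 => x hx; case: ifP => // /andP [/eqP e1 /eqP e2]; exfalso.
  have ha : (a <= Q1)%N by rewrite -e1 -ltnS ltn_ord.
  have hb : (b <= Q2)%N by rewrite -e2 -ltnS ltn_ord.
  move/negbT: hc; rewrite ha hb /= negbK => /andP [/eqP h1 /eqP h2].
  move/negP: hx; apply; apply/eqP; case: x e1 e2 h1 h2 => x1 x2 /= e1 e2 h1 h2; case: y h1 h2 => y1 y2 /= h1 h2; congr (_, _); apply: val_inj; rewrite /= ?h1 ?h2 //.
Qed.
Local Notation rt := (@rate R Q1 Q2 l1 l2 mu p12 p21).
Lemma if_mulr (c : bool) (u r : R) : u * (if c then r else 0) = if c then u * r else 0.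
Proof. by case: c; rewrite ?mulr0. Qed.
Lemma sum_if (c : bool) (G : st -> R) (P : pred st) :
  \sum_(x | P x) (if c then G x else 0) = if c then \sum_(x | P x) G x else 0.
Proof. by case: c => //; rewrite big1. Qed.
Lemma leQ1 (x : st) : (x.1 <= Q1)%N. Proof. by rewrite -ltnS ltn_ord. Qed.
Lemma leQ2 (x : st) : (x.2 <= Q2)%N. Proof. by rewrite -ltnS ltn_ord. Qed.

Lemma inflow_eq (g : st -> R) (y : st) : \sum_(x | x != y) g x * rt x y =
  (if (y.1 < Q1)%N then g (inord y.1.+1, inord y.2) * (if (0 < y.2)%N then l1 else s1_ l1 l2 p21) else 0) +
  (if (y.2 < Q2)%N then g (inord y.1, inord y.2.+1) * (if (0 < y.1)%N then l2 else s2_ l1 l2 p12) else 0) +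
  (if ((y.1 : nat) == Q1) && ((y.2 : nat) == Q2) then mu * \sum_(x | x != y) g x else 0).
Proof.
rewrite /rate; under eq_bigr do rewrite dr_src !mulrDr !if_mulr.
rewrite !big_split /=.
rewrite (sum_pick (fun x => g x * _) (y.1).+1 y.2) (sum_pick (fun x => g x * _) y.1 (y.2).+1).
rewrite sum_if -mulr_suml [X in if _ then X else _]mulrC /=.
rewrite leQ2 leQ1 eqxx (ltn_eqF (ltnSn _)) /= (ltn_eqF (ltnSn (y.2 : nat))) andbF /= !andbT.
congr (_ + _ + _); case: ifP => _ //; exact: mulrC.
Qed.
Definition Dout (y : st) : R :=
  (if (0 < y.1)%N then (if (0 < y.2)%N then l1 else s1_ l1 l2 p21) else 0) +
  (if (0 < y.2)%N then (if (0 < y.1)%N then l2 else s2_ l1 l2 p12) else 0).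
Lemma out_eq (y : st) : \sum_(z | z != y) rt y z =
  Dout y + (if ((y.1 : nat) == Q1) && ((y.2 : nat) == Q2) then 0 else mu).
Proof.
rewrite /rate; under eq_bigr do rewrite dr_tgt.
rewrite !big_split /= !sum_if.
rewrite (sum_pick (fun _ => _) Q1 Q2) (sum_pick (fun _ => _) (y.1).-1 y.2)
  (sum_pick (fun _ => _) y.1 (y.2).-1) /= !leQ1 !leQ2 /= /Dout.
have l1' : ((y.1).-1 <= Q1)%N by apply: leq_trans (leq_pred _) (leQ1 _).
have l2' : ((y.2).-1 <= Q2)%N by apply: leq_trans (leq_pred _) (leQ2 _).
rewrite l1' l2' /=.
congr (_ + _ + _).
- case: ifP => // h; have := ltn_predL (y.1 : nat); rewrite h => /gtn_eqF -> //.
- case: ifP => // h; have := ltn_predL (y.2 : nat); rewrite h => /gtn_eqF ->.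
  by rewrite andbF.
- by rewrite !leqnn /=; case: ((y.1 == Q1 :> nat) && (y.2 == Q2 :> nat)).
Qed.
Lemma sumrec (A q : R) (c : nat -> R) (a : nat) :
  \sum_(0 <= k < a.+2) A ^+ (a.+1 - k) * q ^+ k * c k =
  A * \sum_(0 <= k < a.+1) A ^+ (a - k) * q ^+ k * c k + q ^+ a.+1 * c a.+1.
Proof.
rewrite big_nat_recr //= subnn expr0 mul1r; congr (_ + _).
rewrite mulr_sumr; apply: eq_big_nat => k /andP [_ hk].
by rewrite subSn // exprS !mulrA.
Qed.
Local Notation s1 := (s1_ l1 l2 p21).
Local Notation s2 := (s2_ l1 l2 p12).
Local Notation q1 := (q1_ l1 l2 mu).
Local Notation q2 := (q2_ l1 l2 mu).
Local Notation q3 := (q3_ l1 l2 mu).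
Local Notation E1 := (edge1 Q2 l1 l2 mu p21).
Local Notation E2 := (edge2 Q1 l1 l2 mu p12).
Lemma edge1_rec (hK : s1 + mu != 0) (i : nat) :
 (s1 + mu) * E1 i = (if (0 < i)%N then s1 * E1 i.-1 else 0) +
   l2 * q2 ^+ Q2.-1 * q3 * q1 ^+ i * ('C(Q2 + i - 1, i))%:R.
Proof.
case: i => [|a] /=.
- rewrite /edge1 big_nat1 subnn expr0 !mul1r addn0 bin0 /B2_ add0r. field. exact hK.
- rewrite /edge1 (sumrec _ _ (fun k => ('C(Q2 + k - 1, k))%:R) a) /B2_ /A1_.
  field. exact hK.
Qed.
Lemma edge2_rec (hK : s2 + mu != 0) (i : nat) :
 (s2 + mu) * E2 i = (if (0 < i)%N then s2 * E2 i.-1 else 0) +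
   l1 * q1 ^+ Q1.-1 * q3 * q2 ^+ i * ('C(Q1 + i - 1, i))%:R.
Proof.
case: i => [|a] /=.
- rewrite /edge2 big_nat1 subnn expr0 !mul1r addn0 bin0 /B1_ add0r. field. exact hK.
- rewrite /edge2 (sumrec _ _ (fun k => ('C(Q1 + k - 1, k))%:R) a) /B1_ /A2_.
  field. exact hK.
Qed.
Lemma int_rec (hK : s_ l1 l2 + mu != 0) (i1 i2 : nat) (h : (0 < i1 + i2)%N) :
 ('C(i1+i2,i1))%:R * q1^+i1 * q2^+i2 * q3 * (s_ l1 l2 + mu) =
 (if (0<i1)%N then ('C(i1.-1 + i2, i1.-1))%:R * q1^+i1.-1 * q2^+i2 * q3 * l1 else 0) +
 (if (0<i2)%N then ('C(i1 + i2.-1, i1))%:R * q1^+i1 * q2^+i2.-1 * q3 * l2 else 0).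
Proof.
have e1 : l1 = q1 * (s_ l1 l2 + mu) by rewrite /q1_ divfK.
have e2 : l2 = q2 * (s_ l1 l2 + mu) by rewrite /q2_ divfK.
move: e1 e2; set K := s_ l1 l2 + mu; set x1 := q1; set x2 := q2; set x3 := q3.
move=> e1 e2; rewrite e1 e2.
case: i1 h => [|a]; case: i2 => [|b] // _; rewrite ?ltnn ?ltn0Sn ?succnK.
- rewrite !add0n !bin0 ?addr0 ?add0r exprS; ring.
- rewrite !addn0 !binn ?addr0 ?add0r exprS; ring.
- rewrite !addSn !addnS binS natrD !exprS; ring.
Qed.
Local Notation P := (pi_formula Q1 Q2 l1 l2 mu p12 p21).
Lemma binsym (m n : nat) : 'C(m + n, m) = 'C(m + n, n).
Proof. by rewrite -{2}(addnK n m) bin_sub // leq_addl. Qed.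
Lemma formula_bal (hK : s_ l1 l2 + mu != 0) (hK1 : s1 + mu != 0) (hK2 : s2 + mu != 0)
  (hmu : mu != 0) (hQ1 : (0 < Q1)%N) (hQ2 : (0 < Q2)%N)
  (j1 j2 : nat) (h1 : (j1 <= Q1)%N) (h2 : (j2 <= Q2)%N) (hn : ~~ ((j1 == Q1) && (j2 == Q2))) :
 (if (j1 < Q1)%N then P j1.+1 j2 * (if (0 < j2)%N then l1 else s1) else 0) +
 (if (j2 < Q2)%N then P j1 j2.+1 * (if (0 < j1)%N then l2 else s2) else 0) =
 P j1 j2 * ((if (0 < j1)%N then (if (0 < j2)%N then l1 else s1) else 0) +
   (if (0 < j2)%N then (if (0 < j1)%N then l2 else s2) else 0) + mu).
Proof.
case: j1 h1 hn => [|a] h1 hn; case: j2 h2 hn => [|b] h2 hn; rewrite /pi_formula /=.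
- rewrite hQ1 hQ2 !subn1 !add0r; field; exact hmu.
- rewrite hQ1 -subn_gt0 [(Q2 - b.+2)%N]subnS subn1.
  move: (Q2 - b.+1)%N => i.
  rewrite binsym; have -> : (Q1.-1 + i = Q1 + i - 1)%N by lia.
  rewrite add0r [RHS]mulrC edge2_rec //; case: (0 < i)%N; ring.
- rewrite hQ2 -subn_gt0 [(Q1 - a.+2)%N]subnS subn1.
  move: (Q1 - a.+1)%N => i.
  have -> : (i + Q2.-1 = Q2 + i - 1)%N by lia.
  rewrite addr0 [RHS]mulrC edge1_rec //; case: (0 < i)%N; ring.
- have h : (0 < (Q1 - a.+1) + (Q2 - b.+1))%N by case/nandP: hn => /eqP hn; lia.
  rewrite -[(a.+1 < Q1)%N]subn_gt0 -[(b.+1 < Q2)%N]subn_gt0 [(Q1 - a.+2)%N]subnS [(Q2 - b.+2)%N]subnS.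
  move: (Q1 - a.+1)%N (Q2 - b.+1)%N h => i1 i2 h.
  by rewrite -/(s_ l1 l2) int_rec.
Qed.
Definition top : st := (ord_max, ord_max).
Lemma top_eq (y : st) : (y == top) = ((y.1 : nat) == Q1) && ((y.2 : nat) == Q2).
Proof. by case: y. Qed.
Definition bal (g : st -> R) (y : st) :=
  \sum_(x | x != y) g x * rt x y = g y * \sum_(z | z != y) rt y z.
Lemma global (g : st -> R) : \sum_y (\sum_(x | x != y) g x * rt x y) =
  \sum_y g y * \sum_(z | z != y) rt y z.
Proof.
under eq_bigr do rewrite big_mkcond. rewrite exchange_big /=.
under [RHS]eq_bigr => y _ do rewrite mulr_sumr big_mkcond.
apply: eq_big => // x _; apply: eq_big => // y _ /=.
by rewrite [y == x]eq_sym.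
Qed.
Lemma top_bal (g : st -> R) : (forall y, y != top -> bal g y) -> bal g top.
Proof.
move=> H; have := global g.
rewrite (bigD1 top) //= [in RHS](bigD1 top) //=.
have e : \sum_(y | y != top) (\sum_(x | x != y) g x * rt x y) =
  \sum_(y | y != top) g y * \sum_(z | z != y) rt y z.
  by apply: eq_big => // y hy; exact: H.
by rewrite e => /addIr.
Qed.
Lemma Dout_ge0 (hl1 : 0 <= l1) (hl2 : 0 <= l2) (hs1 : 0 <= s1) (hs2 : 0 <= s2) (y : st) :
  0 <= Dout y.
Proof. rewrite /Dout addr_ge0 //; case: ifP => _ //; case: ifP => _ //. Qed.
Lemma outpos (hl1 : 0 <= l1) (hl2 : 0 <= l2) (hs1 : 0 <= s1) (hs2 : 0 <= s2) (hmu : 0 < mu)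
  (y : st) : y != top -> 0 < \sum_(z | z != y) rt y z.
Proof.
rewrite out_eq -top_eq => /negbTE ->.
have := Dout_ge0 hl1 hl2 hs1 hs2 y; lra.
Qed.
Lemma uniq_bal (hl1 : 0 <= l1) (hl2 : 0 <= l2) (hs1 : 0 <= s1) (hs2 : 0 <= s2) (hmu : 0 < mu)
  (g f : st -> R) : (forall y, y != top -> bal g y) -> (forall y, y != top -> bal f y) ->
  g top = f top -> forall y, g y = f y.
Proof.
move=> Hg Hf Ht.
suff H : forall n (y : st), ((Q1 - y.1) + (Q2 - y.2) <= n)%N -> g y = f y.
  by move=> y; apply: (H _ y (leqnn _)).
elim=> [|n IH] y hy.
- have -> : y = top.
    apply/eqP; rewrite top_eq; have := leQ1 y; have := leQ2 y.
    by move=> a b; apply/andP; split; apply/eqP; lia.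
  exact Ht.
- case: (eqVneq y top) => [->//|hne].
  have pos := outpos hl1 hl2 hs1 hs2 hmu hne.
  have eg := Hg y hne; have ef := Hf y hne.
  rewrite /bal !inflow_eq -top_eq (negbTE hne) in eg ef.
  have a1 := leQ1 y; have a2 := leQ2 y.
  have e1 : (y.1 < Q1)%N -> g (inord y.1.+1, inord y.2) = f (inord y.1.+1, inord y.2).
    move=> h; apply: IH; rewrite /= !inordK; lia.
  have e2 : (y.2 < Q2)%N -> g (inord y.1, inord y.2.+1) = f (inord y.1, inord y.2.+1).
    move=> h; apply: IH; rewrite /= !inordK; lia.
  apply: (mulIf (lt0r_neq0 pos)); rewrite -eg -ef.
  congr (_ + _ + _).
  + by case: ifP => // h; rewrite e1.
  + by case: ifP => // h; rewrite e2.
Qed.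
Lemma f_ge0 (hl1 : 0 <= l1) (hl2 : 0 <= l2) (hs1 : 0 <= s1) (hs2 : 0 <= s2) (hmu : 0 < mu)
  (j1 j2 : nat) : 0 <= P j1 j2.
Proof.
have hK : 0 < s_ l1 l2 + mu by rewrite /s_; lra.
have hK1 : 0 < s1 + mu by lra.
have hK2 : 0 < s2 + mu by lra.
have hq1 : 0 <= q1 by rewrite /q1_ divr_ge0 // ltW.
have hq2 : 0 <= q2 by rewrite /q2_ divr_ge0 // ltW.
have hq3 : 0 <= q3 by rewrite /q3_ divr_ge0 // ltW.
have hA1 : 0 <= A1_ l1 l2 mu p21 by rewrite /A1_ divr_ge0 // ltW.
have hA2 : 0 <= A2_ l1 l2 mu p12 by rewrite /A2_ divr_ge0 // ltW.
have hB1 : 0 <= B1_ l1 l2 mu p12 by rewrite /B1_ divr_ge0 // ltW.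
have hB2 : 0 <= B2_ l1 l2 mu p21 by rewrite /B2_ divr_ge0 // ltW.
have hE1 : forall i, 0 <= E1 i.
  move=> i; rewrite /edge1; apply: mulr_ge0; first by apply: mulr_ge0; [apply: mulr_ge0|]; rewrite ?exprn_ge0.
  apply: sumr_ge0 => k _; apply: mulr_ge0; rewrite ?ler0n //; apply: mulr_ge0; exact: exprn_ge0.
have hE2 : forall i, 0 <= E2 i.
  move=> i; rewrite /edge2; apply: mulr_ge0; first by apply: mulr_ge0; [apply: mulr_ge0|]; rewrite ?exprn_ge0.
  apply: sumr_ge0 => k _; apply: mulr_ge0; rewrite ?ler0n //; apply: mulr_ge0; exact: exprn_ge0.
rewrite /pi_formula; case: ifP => _.
  apply: mulr_ge0 => //; apply: mulr_ge0; [apply: mulr_ge0 | exact: exprn_ge0]; [exact: ler0n | exact: exprn_ge0].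
case: ifP => _ //; case: ifP => _ //.
by apply: addr_ge0; apply: mulr_ge0 => //; apply: divr_ge0 => //; apply: ltW.
Qed.
Lemma f_bal (hl1 : 0 < l1) (hl2 : 0 < l2) (hs1 : 0 <= s1) (hs2 : 0 <= s2) (hmu : 0 < mu)
  (hQ1 : (0 < Q1)%N) (hQ2 : (0 < Q2)%N) (y : st) :
  y != top -> bal (fun x => P x.1 x.2) y.
Proof.
move=> hne; rewrite /bal inflow_eq out_eq -top_eq (negbTE hne) addr0.
have a1 := leQ1 y; have a2 := leQ2 y.
have -> : (if (y.1 < Q1)%N then P (inord (n':=Q1) y.1.+1, inord (n':=Q2) y.2).1
             (inord (n':=Q1) y.1.+1, inord (n':=Q2) y.2).2 * (if (0 < y.2)%N then l1 else s1) else 0)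
   = (if (y.1 < Q1)%N then P y.1.+1 y.2 * (if (0 < y.2)%N then l1 else s1) else 0).
  by case: ifP => h //=; rewrite !inordK //; lia.
have -> : (if (y.2 < Q2)%N then P (inord (n':=Q1) y.1, inord (n':=Q2) y.2.+1).1
             (inord (n':=Q1) y.1, inord (n':=Q2) y.2.+1).2 * (if (0 < y.1)%N then l2 else s2) else 0)
   = (if (y.2 < Q2)%N then P y.1 y.2.+1 * (if (0 < y.1)%N then l2 else s2) else 0).
  by case: ifP => h //=; rewrite !inordK //; lia.
rewrite /Dout; apply: formula_bal => //.
all: try by rewrite -top_eq.
all: apply: lt0r_neq0 => //; rewrite /s_; lra.
Qed.
End S.
Theorem theorem3 (R : realFieldType) (Q1 Q2 : nat) (l1 l2 mu p12 p21 : R)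
  (hQ1 : (1 <= Q1)%N) (hQ2 : (1 <= Q2)%N)
  (hl1 : 0 < l1) (hl2 : 0 < l2) (hmu : 0 < mu)
  (hp12 : 0 <= p12 <= 1) (hp21 : 0 <= p21 <= 1) :
  forall pi : state Q1 Q2 -> R,
    stationary l1 l2 mu p12 p21 pi <->
    (forall x : state Q1 Q2,
       pi x = pi_formula Q1 Q2 l1 l2 mu p12 p21 x.1 x.2).
Proof.
move=> pi.
have hs1 : 0 <= s1_ l1 l2 p21.
  by rewrite /s1_; case/andP: hp21 => h _; apply: addr_ge0; [lra | apply: mulr_ge0; lra].
have hs2 : 0 <= s2_ l1 l2 p12.
  by rewrite /s2_; case/andP: hp12 => h _; apply: addr_ge0; [lra | apply: mulr_ge0; lra].
have hl1' : 0 <= l1 by lra.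
have hl2' : 0 <= l2 by lra.
have hK : s_ l1 l2 + mu != 0 by apply: lt0r_neq0; rewrite /s_; lra.
have hmu0 : mu != 0 by apply: lt0r_neq0.
pose f := fun x : state Q1 Q2 => pi_formula Q1 Q2 l1 l2 mu p12 p21 x.1 x.2.
have fbal : forall y, y != top Q1 Q2 -> bal l1 l2 mu p12 p21 f y.
  by move=> y; apply: f_bal.
have ftop : f (top Q1 Q2) = mu / (s_ l1 l2 + mu).
  rewrite /f /pi_formula /= hQ1 hQ2 /= !subnn addn0 bin0 !expr0 !mul1r.
  by rewrite /q3_.
have topeq : forall g, bal l1 l2 mu p12 p21 g (top Q1 Q2) ->
    mu * \sum_(x | x != top Q1 Q2) g x = g (top Q1 Q2) * (l1 + l2).
  move=> g; rewrite /bal inflow_eq out_eq /top /= !ltnn !eqxx /= /Dout /= hQ1 hQ2 /=.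
  by rewrite !add0r !addr0.
have sumsplit : forall g : state Q1 Q2 -> R,
    \sum_x g x = g (top Q1 Q2) + \sum_(x | x != top Q1 Q2) g x.
  by move=> g; rewrite (bigD1 (top Q1 Q2)).
split.
- case=> [hnn [hsum hbal]].
  have pt : pi (top Q1 Q2) = f (top Q1 Q2).
    have e := topeq pi (hbal _).
    have e2 : pi (top Q1 Q2) * (s_ l1 l2 + mu) = mu.
      rewrite /s_ mulrDr -e -[RHS]mulr1 -hsum sumsplit; ring.
    by rewrite ftop; apply: (mulIf hK); rewrite e2 divfK.
  move=> x; apply: (uniq_bal hl1' hl2' hs1 hs2 hmu _ fbal pt) => y hy; exact: hbal.
- move=> H.
  have pibal : forall y, y != top Q1 Q2 -> bal l1 l2 mu p12 p21 pi y.
    move=> y hy; rewrite /bal; under eq_bigr => x _ do rewrite H.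
    rewrite H; exact: fbal.
  have pt := top_bal pibal.
  split; [|split].
  + by move=> x; rewrite H; apply: f_ge0.
  + rewrite sumsplit; have := topeq pi pt; rewrite H -/(f _) ftop => e.
    have -> : \sum_(x | x != top Q1 Q2) pi x = (l1 + l2) / (s_ l1 l2 + mu).
      apply: (mulfI hmu0); rewrite e; field; exact: hK.
    rewrite /s_; field; exact: hK.
  + move=> y; case: (eqVneq y (top Q1 Q2)) => [->|hy]; [exact: pt | exact: pibal].
Qed.
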